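(* For all integers $n\ge0$, $r\ge0$ and every real $x\ne0$, the $r$th derivative of $\mathfrak{C}_n$ satisfies $$\mathfrak{C}_n^{(r)}(x)=\frac{r!}{x^r}\sum_{k=0}^{r}\binom rk(-1)^{r-k}\sum_{j_0+j_1+\cdots+j_k=n}\binom{n}{j_0,j_1,\dots,j_k}\mathfrak{C}_{j_0}(x)\mathfrak{C}_{j_1}(x)\cdots\mathfrak{C}_{j_k}(x),$$ where the inner sum runs over all tuples of non-negative integers $(j_0,\dots,j_k)$ with sum $n$.
   Context: For $n\ge1$ the central factorial is $x^{[n]}=x\,(x+\tfrac n2-1)(x+\tfrac n2-2)\cdots(x-\tfrac n2+1)$ (a product of $n$ factors), and $x^{[0]}=1$. The central factorial numbers of the second kind $T(n,k)$ ($0\le k\le n$) are defined by $x^n=\sum_{k=0}^n T(n,k)\,x^{[k]}$; equivalently $T(n,k)=\frac1{k!}\sum_{j=0}^k(-1)^j\binom kj\left(\frac k2-j\right)^n$, and $T(n,k)=0$ for $k>n$. The $n$th central Fubini-like polynomial is $\mathfrak{C}_n(x)=\sum_{k=0}^n k!\,T(n,k)\,x^k$. *)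

(* Defs.v *)
From HB Require Import structures.
From mathcomp Require Import all_boot all_order all_algebra.
Set Implicit Arguments. Unset Strict Implicit. Unset Printing Implicit Defensive.
Import Order.TTheory GRing.Theory Num.Theory.
Local Open Scope ring_scope.

Definition cfT (R : realFieldType) (n k : nat) : R :=
  (k`!%:R)^-1 * \sum_(j < k.+1)
      (-1) ^+ j * ('C(k, j))%:R * ((k%:R / 2%:R) - (j : nat)%:R) ^+ n.

Definition cfub (R : realFieldType) (n : nat) : {poly R} :=
  \sum_(k < n.+1) ((k`!)%:R * cfT R n k) *: 'X^k.

Definition multinom (m n : nat) (j : {ffun 'I_m -> 'I_n.+1}) : nat :=
  n`! %/ \prod_(i < m) (j i : nat)`!.

(* Main.v *)
Require Import Defs.
From HB Require Import structures.
From mathcomp Require Import all_boot all_order all_algebra.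
From mathcomp Require Import ring.
Import Order.TTheory GRing.Theory Num.Theory.
Set Implicit Arguments. Unset Strict Implicit. Unset Printing Implicit Defensive.
Local Open Scope ring_scope.
Definition eqm (R : realFieldType) (n : nat) (p q : {poly R}) :=
  take_poly n.+1 p = take_poly n.+1 q.

Lemma eqmP (R : realFieldType) n (p q : {poly R}) :
  eqm n p q <-> (forall i, (i <= n)%N -> p`_i = q`_i).
Proof.
split=> [h i hi|h].
  by have := congr1 (fun s : {poly R} => s`_i) (h : take_poly n.+1 p = _); rewrite /= !coef_take_poly ltnS hi.
by apply/polyP => i; rewrite !coef_take_poly ltnS; case: ifP => // /h.
Qed.

Arguments eqmP {R n p q}.
Lemma eqmE (R : realFieldType) n (p q : {poly R}) i :
  eqm n p q -> (i <= n)%N -> p`_i = q`_i.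
Proof. by move/eqmP; apply. Qed.
Arguments eqmE {R n p q i}.
Lemma eqm_refl (R : realFieldType) n (p : {poly R}) : eqm n p p.
Proof. by []. Qed.
Lemma eqm_sym (R : realFieldType) {n : nat} (p q : {poly R}) : eqm n p q -> eqm n q p.
Proof. by []. Qed.
Lemma eqm_trans (R : realFieldType) {n : nat} (p q s : {poly R}) :
  eqm n p q -> eqm n q s -> eqm n p s.
Proof. by rewrite /eqm => ->. Qed.
Lemma eqmD (R : realFieldType) {n : nat} (p q p' q' : {poly R}) :
  eqm n p p' -> eqm n q q' -> eqm n (p + q) (p' + q').
Proof. by move=> /eqmP h1 /eqmP h2; apply/eqmP => i hi; rewrite !coefD h1 // h2. Qed.
Lemma eqmN (R : realFieldType) {n : nat} (p p' : {poly R}) :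
  eqm n p p' -> eqm n (- p) (- p').
Proof. by move=> /eqmP h1; apply/eqmP => i hi; rewrite !coefN h1. Qed.
Lemma eqmM (R : realFieldType) {n : nat} (p q p' q' : {poly R}) :
  eqm n p p' -> eqm n q q' -> eqm n (p * q) (p' * q').
Proof.
move=> /eqmP h1 /eqmP h2; apply/eqmP => i hi; rewrite !coefM; apply: eq_bigr => j _.
rewrite h1 ?h2 //; first exact: leq_trans (leq_subr _ _) hi.
exact: leq_trans (ltnSE (ltn_ord j)) hi.
Qed.
Lemma eqmX (R : realFieldType) {n : nat} (p p' : {poly R}) k :
  eqm n p p' -> eqm n (p ^+ k) (p' ^+ k).
Proof.
move=> h; elim: k => [|k IH]; first by rewrite !expr0.
by rewrite !exprS; apply: eqmM.
Qed.

Lemma natf_fact (R : realFieldType) k : (k`!%:R : R) != 0.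
Proof. by rewrite pnatr_eq0 -lt0n fact_gt0. Qed.

Lemma binR (R : realFieldType) i j : (j <= i)%N ->
  ('C(i, j)%:R : R) = i`!%:R / (j`!%:R * (i - j)`!%:R).
Proof.
move=> ji; rewrite -(bin_fact ji) !natrM mulfK //.
by rewrite mulf_neq0 // natf_fact.
Qed.

Definition ex (R : realFieldType) (n : nat) (l : R) : {poly R} :=
  \poly_(i < n.+1) (l ^+ i / (i`!)%:R).

Lemma eqm_ex (R : realFieldType) n (l u : R) :
  eqm n (ex n l * ex n u) (ex n (l + u)).
Proof.
apply/eqmP => i hi; rewrite coefM coef_poly ltnS hi (addrC l) exprDn mulr_suml.
apply: eq_bigr => j _.
have ji : (j <= i)%N := ltnSE (ltn_ord j).
rewrite !coef_poly ltnS (leq_trans ji hi) ltnS (leq_trans (leq_subr _ _) hi).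
rewrite -[_ *+ 'C(i, j)]mulr_natr binR //.
field; rewrite ?mulf_neq0 ?natf_fact //.
Qed.

Lemma ex0 (R : realFieldType) n : ex n (0 : R) = 1.
Proof.
apply/polyP => i; rewrite coef_poly coef1; case: i => [|i] /=.
  by rewrite expr0 fact0 divr1.
by rewrite expr0n /= mul0r; case: ifP.
Qed.

Lemma eqm_exX (R : realFieldType) n (l : R) p :
  eqm n (ex n l ^+ p) (ex n (p%:R * l)).
Proof.
elim: p => [|p IH]; first by rewrite expr0 mul0r ex0.
rewrite exprS. have := eqmM (eqm_refl n (ex n l)) IH. move=> H. apply: (eqm_trans H). 
apply: eqm_trans (eqm_ex _ _ _) _.
by rewrite -{1}(mul1r l) -mulrDl -natr1 addrC.
Qed.

Lemma signP (R : realFieldType) i (q : {poly R}) :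
  (-1) ^+ i * q = ((-1) ^+ i : R) *: q.
Proof. by rewrite -mul_polyC rmorph_sign. Qed.

Definition EE (R : realFieldType) n : {poly R} :=
  ex n (2%:R^-1) - ex n (- 2%:R^-1).

Lemma coefEX (R : realFieldType) n p i : (i <= n)%N ->
  ((EE R n) ^+ p)`_i = p`!%:R * cfT R i p / i`!%:R.
Proof.
move=> hi; rewrite /EE exprBn coef_sum /cfT mulrA mulfV ?natf_fact // mul1r.
rewrite mulr_suml; apply: eq_bigr => j _.
have jp : (j <= p)%N := ltnSE (ltn_ord j).
rewrite coefMn -mulrA signP coefZ.
rewrite (eqmE (eqmM (eqm_exX n _ _) (eqm_exX n _ _))) // (eqmE (eqm_ex n _ _)) // coef_poly ltnS hi.
have -> : (p - j)%:R * 2%:R^-1 + j%:R * - 2%:R^-1 = p%:R / 2%:R - j%:R :> R.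
  by rewrite natrB //; field.
by rewrite -mulr_natr; ring.
Qed.

Lemma fact_prod_dvd (I : Type) (r : seq I) (F : I -> nat) :
  (\prod_(i <- r) (F i)`! %| (\sum_(i <- r) F i)`!)%N.
Proof.
elim: r => [|a r IH]; first by rewrite !big_nil.
rewrite !big_cons.
have h : ((F a)`! * (\sum_(i <- r) F i)`! %| (F a + \sum_(i <- r) F i)`!)%N.
  rewrite -(bin_fact (leq_addr (\sum_(i <- r) F i) (F a))) addKn.
  exact: dvdn_mull.
exact: dvdn_trans (dvdn_mul (dvdnn _) IH) h.
Qed.

Lemma Sf_eq (R : realFieldType) n k (c : nat -> R) :
  \sum_(j : {ffun 'I_k.+1 -> 'I_n.+1} | (\sum_(i < k.+1) (j i : nat))%N == n)
        (multinom j)%:R * \prod_(i < k.+1) c (j i)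
  = n`!%:R * ((\sum_(m < n.+1) (c m / m`!%:R) *: 'X^m) ^+ k.+1)`_n.
Proof.
set P := \sum_(m < n.+1) _.
have -> : P ^+ k.+1 = \prod_(i < k.+1) P by rewrite prodr_const card_ord.
rewrite /P bigA_distr_bigA /= coef_sum mulr_sumr big_mkcond /=.
apply: eq_bigr => j _.
have -> : \prod_(i < k.+1) ((c (j i) / (j i)`!%:R) *: 'X^(j i))
   = (\prod_(i < k.+1) (c (j i) / (j i)`!%:R))%:P * 'X^(\sum_(i < k.+1) (j i : nat)).
  rewrite rmorph_prod -prodrXr -big_split /=.
  by apply: eq_bigr => i _; rewrite mul_polyC.
rewrite coefCM coefXn eq_sym.
case: eqP => [hs|_]; last by rewrite !mulr0.
rewrite mulr1 /multinom natr_div; last first.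
- by rewrite unitfE pnatr_eq0 -lt0n; apply/prodn_gt0 => i; exact: fact_gt0.
- by move: (fact_prod_dvd (index_enum 'I_k.+1) (fun i => nat_of_ord (j i))); rewrite -hs.
rewrite prodf_div natr_prod; field.
by rewrite prodf_seq_neq0; apply/allP => i _; exact: natf_fact.
Qed.

Lemma EE_val (R : realFieldType) n p i : (i < p)%N -> ((EE R n) ^+ p)`_i = 0.
Proof.
move=> ip.
have : root (EE R n) 0.
  rewrite /root horner_coef0 /EE coefB !coef_poly /= !expr0 subrr //.
case/factor_theorem => q ->; rewrite subr0 exprMn coefMXn ip //.
Qed.

Definition YY (R : realFieldType) n (x : R) := x *: EE R n.

Lemma YY_val (R : realFieldType) n (x : R) p i : (i < p)%N -> ((YY n x) ^+ p)`_i = 0.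
Proof. by move=> ip; rewrite /YY exprZn coefZ EE_val // mulr0. Qed.

Lemma eqm_high (R : realFieldType) n (x : R) m (s : {poly R}) :
  (n < m)%N -> eqm n ((YY n x) ^+ m * s) 0.
Proof.
move=> nm; apply/eqmP => i hi; rewrite coef0 coefM big1 // => j _.
rewrite YY_val ?mul0r //.
exact: leq_ltn_trans (ltnSE (ltn_ord j)) (leq_ltn_trans hi nm).
Qed.

Definition QQ (R : realFieldType) n (x : R) := \sum_(p < n.+1) (YY n x) ^+ p.

Lemma eqm_Q1 (R : realFieldType) n (x : R) : eqm n (QQ n x * (1 - YY n x)) 1.
Proof.
have -> : QQ n x * (1 - YY n x) = 1 - (YY n x) ^+ n.+1 * 1.
  by rewrite mulr1 mulrC -(opprB (YY n x) 1) mulNr /QQ -subrX1 opprB.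
have := eqm_high x 1 (ltnSn n).
move=> /eqmP h; apply/eqmP => i hi; rewrite coefB h // coef0 subr0 //.
Qed.

Definition DD (R : realFieldType) n (x : R) r :=
  \sum_(m < n.+1) ('C(m, r))%:R *: (YY n x) ^+ m.

Lemma DD_step (R : realFieldType) n (x : R) r :
  (1 - YY n x) * DD n x r.+1 + 'C(n.+1, r.+1)%:R *: (YY n x) ^+ n.+1
  = YY n x * DD n x r.
Proof.
set Y := YY n x.
have e1 : DD n x r.+1 = \sum_(m < n) 'C(m.+1, r.+1)%:R *: Y ^+ m.+1.
  by rewrite /DD big_ord_recl /= scale0r add0r.
have e2 : forall s, Y * DD n x s =
   \sum_(m < n) 'C(m, s)%:R *: Y ^+ m.+1 + 'C(n, s)%:R *: Y ^+ n.+1.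
  move=> s; rewrite /DD mulr_sumr big_ord_recr /=; congr (_ + _).
    by apply: eq_bigr => m _; rewrite -scalerAr -exprS.
  by rewrite -scalerAr -exprS.
rewrite mulrBl mul1r e2 e2 {1}e1 binS natrD scalerDl.
have -> : \sum_(m < n) 'C(m.+1, r.+1)%:R *: Y ^+ m.+1 =
   \sum_(m < n) 'C(m, r.+1)%:R *: Y ^+ m.+1 + \sum_(m < n) 'C(m, r)%:R *: Y ^+ m.+1.
  by rewrite -big_split; apply: eq_bigr => m _; rewrite binS natrD scalerDl.
ring.
Qed.

Lemma eqm_Dstep (R : realFieldType) n (x : R) r :
  eqm n ((1 - YY n x) * DD n x r.+1) (YY n x * DD n x r).
Proof.
apply/eqmP => i hi; rewrite -DD_step coefD coefZ YY_val // mulr0 addr0 //.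
Qed.

Lemma DD0 (R : realFieldType) n (x : R) : DD n x 0 = QQ n x.
Proof. by apply: eq_bigr => m _; rewrite bin0 scale1r. Qed.

Lemma eqm_DY (R : realFieldType) n (x : R) r :
  eqm n ((1 - YY n x) ^+ r.+1 * DD n x r) (YY n x ^+ r).
Proof.
elim: r => [|r IH].
  by rewrite expr1 DD0 expr0 mulrC; exact: eqm_Q1.
have -> : (1 - YY n x) ^+ r.+2 * DD n x r.+1 =
   ((1 - YY n x) * DD n x r.+1) * (1 - YY n x) ^+ r.+1 by rewrite exprS; ring.
apply: (eqm_trans (eqmM (eqm_Dstep n x r) (eqm_refl n _))).
have -> : YY n x * DD n x r * (1 - YY n x) ^+ r.+1 =
   YY n x * ((1 - YY n x) ^+ r.+1 * DD n x r) by ring.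
by rewrite [YY n x ^+ r.+1]exprS; apply: eqmM (eqm_refl n _) IH.
Qed.

Lemma cfub_horner (R : realFieldType) m (x : R) :
  (cfub R m).[x] = \sum_(k < m.+1) k`!%:R * cfT R m k * x ^+ k.
Proof.
rewrite /cfub horner_sum; apply: eq_bigr => k _.
by rewrite hornerZ hornerXn.
Qed.

Definition PP (R : realFieldType) n (x : R) : {poly R} :=
  \sum_(m < n.+1) ((cfub R m).[x] / m`!%:R) *: 'X^m.

Lemma eqm_PQ (R : realFieldType) n (x : R) : eqm n (PP n x) (QQ n x).
Proof.
apply/eqmP => i hi.
rewrite (_ : PP n x = \poly_(m < n.+1) ((cfub R m).[x] / m`!%:R)); last by rewrite poly_def.
rewrite coef_poly ltnS hi /QQ coef_sum cfub_horner mulr_suml.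
rewrite (@big_ord_widen _ _ _ i.+1 n.+1 (fun k : nat => k`!%:R * cfT R i k * x ^+ k / i`!%:R) hi) big_mkcond /=.
apply: eq_bigr => p _; rewrite /YY exprZn coefZ.
case: ifP => hp.
  by rewrite coefEX //; ring.
by rewrite EE_val ?mulr0 // ltnNge -ltnS hp.
Qed.

Lemma eqm_main (R : realFieldType) n (x : R) r :
  eqm n (PP n x * (PP n x - 1) ^+ r) (DD n x r).
Proof.
set Q := QQ n x; set Y := YY n x.
have hPQ := eqm_PQ n x.
apply: (eqm_trans (eqmM hPQ (eqmX _ (eqmD hPQ (eqm_refl n (-1)))))).
have hQ1 : eqm n (Q - 1) (Q * Y).
  have -> : Q * Y = Q - Q * (1 - Y) by ring.
  exact: eqmD (eqm_refl n Q) (eqmN (eqm_sym (eqm_Q1 n x))).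
apply: (eqm_trans (eqmM (eqm_refl n Q) (eqmX r hQ1))).
have -> : Q * (Q * Y) ^+ r = Q ^+ r.+1 * Y ^+ r by rewrite exprMn exprS mulrA.
apply: (eqm_trans (eqmM (eqm_refl n _) (eqm_sym (eqm_DY n x r)))).
have -> : Q ^+ r.+1 * ((1 - Y) ^+ r.+1 * DD n x r) = (Q * (1 - Y)) ^+ r.+1 * DD n x r
  by rewrite exprMn mulrA.
apply: (eqm_trans (eqmM (eqmX r.+1 (eqm_Q1 n x)) (eqm_refl n _))).
by rewrite expr1n mul1r; exact: eqm_refl.
Qed.

Lemma coefDD_n (R : realFieldType) n (x : R) r :
  (DD n x r)`_n = \sum_(m < n.+1) 'C(m, r)%:R * x ^+ m * (m`!%:R * cfT R n m / n`!%:R).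
Proof.
rewrite /DD coef_sum; apply: eq_bigr => m _.
by rewrite coefZ /YY exprZn coefZ coefEX // mulrA.
Qed.

Lemma coef_PPm (R : realFieldType) n (x : R) r :
  (PP n x * (PP n x - 1) ^+ r)`_n =
  \sum_(k < r.+1) 'C(r, k)%:R * (-1) ^+ (r - k) * (PP n x ^+ k.+1)`_n.
Proof.
rewrite addrC exprDn mulr_sumr coef_sum; apply: eq_bigr => k _.
rewrite mulrnAr coefMn signP -scalerAr coefZ -exprS.
by rewrite -mulr_natl; ring.
Qed.

Lemma deriv_x (R : realFieldType) n r (x : R) :
  ((cfub R n)^`(r)).[x] * x ^+ r =
  r`!%:R * \sum_(m < n.+1) 'C(m, r)%:R * x ^+ m * (m`!%:R * cfT R n m).
Proof.
rewrite /cfub raddf_sum horner_sum mulr_suml mulr_sumr; apply: eq_bigr => k _.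
rewrite /= derivnZ hornerZ derivnXn hornerMn hornerXn.
case: (leqP r k) => rk.
  rewrite -bin_ffact mulrnA -mulr_natr -mulr_natr.
  have -> : x ^+ k = x ^+ (k - r) * x ^+ r by rewrite -exprD subnK.
  ring.
by rewrite ffact_small // bin_small // mulr0n !(mulr0, mul0r).
Qed.

Theorem theorem7 (R : realFieldType) (n r : nat) (x : R) :
  x != 0 ->
  ((cfub R n)^`(r)).[x] =
    (r`!)%:R / x ^+ r *
    \sum_(k < r.+1)
      ('C(r, k))%:R * (-1) ^+ (r - k) *
      \sum_(j : {ffun 'I_k.+1 -> 'I_n.+1} | (\sum_(i < k.+1) (j i : nat))%N == n)
        (multinom j)%:R * \prod_(i < k.+1) (cfub R (j i)).[x].
Proof.
move=> x0.
rewrite (eq_bigr (fun k : 'I_r.+1 => n`!%:R * ('C(r, k)%:R * (-1) ^+ (r - k) *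
            (PP n x ^+ k.+1)`_n))); last first.
  move=> k _; rewrite (Sf_eq n k (fun m => (cfub R m).[x])) -/(PP n x); ring.
rewrite -mulr_sumr -coef_PPm (eqmE (eqm_main n x r)) // coefDD_n.
have xr : x ^+ r != 0 by rewrite expf_neq0.
apply: (mulIf xr); rewrite deriv_x.
have -> : n`!%:R * \sum_(m < n.+1) 'C(m, r)%:R * x ^+ m * (m`!%:R * cfT R n m / n`!%:R)
   = \sum_(m < n.+1) 'C(m, r)%:R * x ^+ m * (m`!%:R * cfT R n m).
  by rewrite mulr_sumr; apply: eq_bigr => m _; field; exact: natf_fact.
by field.
Qed.
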